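(* Let $\mathcal N$ be a network with a binary collision profile and character $D^*$, let $T\ge\max(D^*,1)$ be an integer, and let $(A_0,A_1,\dots,A_k)$, $k\ge1$, be a closed path in $(\mathcal M_T,\mathcal E_T)$. Define the schedule $S$ of period $kT$ by $S[T,ak+i]=A_i$ for all $a\in\mathbb Z$ and $i=0,\dots,k-1$. Then $S$ is collision free.
   Context: A network is a triple $\mathcal N=(\mathcal L,\mathcal I,D_{\mathcal L})$ where $\mathcal L$ is a finite nonempty set of links, each $\mathcal I(l)$ is a collection of nonempty subsets of $\mathcal L$, and $D_{\mathcal L}$ assigns an integer $D_{\mathcal L}(l,l')$ to every pair with $l'\in\phi$ for some $\phi\in\mathcal I(l)$. The profile is binary if every $\phi\in\mathcal I(l)$ is a singleton. The character is $D^*=\max_{l}\max_{\phi\in\mathcal I(l)}\max_{l'\in\phi}|D_{\mathcal L}(l,l')|$ (0 if there are no collision sets). A schedule is a map $S:\mathcal L\times\mathbb Z\to\{0,1\}$; $S(l,t)$ has a collision if there is $\phi\in\mathcal I(l)$ with $S(l',t+D_{\mathcal L}(l,l'))=1$ for all $l'\in\phi$; $S$ is collision free if no $(l,t)$ with $S(l,t)=1$ has a collision. $S[T,k]$ is the $|\mathcal L|\times T$ binary matrix with $S[T,k](l,j)=S(l,kT+j)$, $j=0,\dots,T-1$. The scheduling graph $(\mathcal M_T,\mathcal E_T)$ has vertex set $\mathcal M_T$ = all $|\mathcal L|\times T$ binary matrices $A$ with $A=S'[T,0]$ for some collision-free schedule $S'$, and edge set $\mathcal E_T$ = all pairs $(A,B)$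 with $A=S'[T,0]$, $B=S'[T,1]$ for some collision-free schedule $S'$. A closed path is a sequence $(A_0,\dots,A_k)$ with $(A_i,A_{i+1})\in\mathcal E_T$ for all $i$ and $A_k=A_0$. *)

(* Defs.v *)
From mathcomp Require Import all_boot all_order all_algebra.
Set Implicit Arguments. Unset Strict Implicit. Unset Printing Implicit Defensive.
Import Order.TTheory GRing.Theory Num.Theory.

(* A network over the finite set of links L:
   I l : {set {set L}} is the collection of collision sets of link l,
   D : L -> L -> int gives the delays (only values D l l' with l' in some
   phi \in I l matter). *)

Definition network_ok (L : finType) (I : L -> {set {set L}}) : Prop :=
  (0 < #|L|)%N /\ forall l phi, phi \in I l -> phi != set0.

Definition binary_profile (L : finType) (I : L -> {set {set L}}) : Prop :=
  forall l phi, phi \in I l -> #|phi| = 1%N.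

(* character D^* (0 if there are no collision sets) *)
Definition character (L : finType) (I : L -> {set {set L}}) (D : L -> L -> int) : nat :=
  \max_(l : L) \max_(phi in I l) \max_(l' in phi) `|D l l'|%N.

Definition schedule (L : finType) := L -> int -> bool.

Definition has_collision (L : finType) (I : L -> {set {set L}}) (D : L -> L -> int)
  (S : schedule L) (l : L) (t : int) : Prop :=
  exists2 phi, phi \in I l & forall l', l' \in phi -> S l' (t + D l l')%R.

Definition collision_free (L : finType) (I : L -> {set {set L}}) (D : L -> L -> int)
  (S : schedule L) : Prop :=
  forall l t, S l t -> ~ has_collision I D S l t.

Definition bmatrix (L : finType) (T : nat) := {ffun L * 'I_T -> bool}.

(* S[T,k](l,j) = S(l, kT + j) *)
Definition block (L : finType) (S : schedule L) (T : nat) (k : int) : bmatrix L T :=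
  [ffun p : L * 'I_T => S p.1 (k * T%:Z + (nat_of_ord p.2)%:Z)%R].

Definition vertex (L : finType) I D (T : nat) (A : bmatrix L T) : Prop :=
  exists S' : schedule L, collision_free I D S' /\ A = block S' T 0.

Definition edge (L : finType) I D (T : nat) (A B : bmatrix L T) : Prop :=
  exists S' : schedule L, collision_free I D S' /\ A = block S' T 0 /\ B = block S' T 1.

Definition closed_path (L : finType) I D (T : nat) (k : nat) (A : nat -> bmatrix L T) : Prop :=
  (forall i, (i < k)%N -> edge I D (A i) (A i.+1)) /\ A k = A 0%N.

(* Main.v *)
Require Import Defs.
From mathcomp Require Import all_boot all_order all_algebra.
From mathcomp Require Import zify.
Import Order.TTheory GRing.Theory Num.Theory.
Local Open Scope ring_scope.

Lemma blockE (L : finType) (S : schedule L) (T : nat) m l (j : 'I_T) :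
  block S T m (l, j) = S l (m * T%:Z + j%:Z)%R.
Proof. by rewrite ffunE. Qed.

Lemma ord_of_int {T : nat} {u : int} : (0 <= u)%R -> (u < T%:Z)%R ->
  exists j : 'I_T, u = (nat_of_ord j)%:Z.
Proof.
move=> h0 h1; have hu : (absz u < T)%N by lia.
exists (Ordinal hu) => /=; lia.
Qed.

Lemma window (L : finType) (I : L -> {set {set L}}) (D : L -> L -> int)
  (T k : nat) (A : nat -> bmatrix L T) (S : schedule L) :
  (1 <= k)%N ->
  closed_path I D k A ->
  (forall (a : int) (i : nat), (i < k)%N ->
      block S T (a * k%:Z + i%:Z)%R = A i) ->
  forall n : int, exists S', collision_free I D S' /\
    forall l (u : int), (0 <= u)%R -> (u < 2 * T%:Z)%R ->
      S l (n * T%:Z + u)%R = S' l u.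
Proof.
move=> hk [hedge hcl] hS n.
set a := (n %/ k%:Z)%Z.
have hr0 : (0 <= (n %% k%:Z)%Z)%R by apply: modz_ge0; lia.
have hr1 : ((n %% k%:Z)%Z < k%:Z)%R by apply: ltz_pmod; lia.
set i := absz (n %% k%:Z)%Z.
have hik : (i < k)%N by rewrite /i; lia.
have hn : n = (a * k%:Z + i%:Z)%R.
  rewrite /a /i {1}(divz_eq n k%:Z); congr (_ + _)%R; lia.
have hb0 : block S T n = A i by rewrite hn; apply: hS.
have hb1 : block S T (n + 1)%R = A i.+1.
  case: (ltnP i.+1 k) => hi.
    have -> : (n + 1 = a * k%:Z + (i.+1)%:Z)%R by rewrite hn; lia.
    by apply: hS.
  have hik' : i.+1 = k by lia.
  rewrite hik' hcl.
  have -> : (n + 1 = (a + 1) * k%:Z + 0%:Z)%R.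
    rewrite hn -hik' mulrDl mul1r; lia.
  by apply: hS; lia.
have [S' [hcf [h0 h1]]] := hedge i hik.
exists S'; split => // l u hu0 hu1.
case: (ltrP u T%:Z) => hu.
  have [j ->] := ord_of_int hu0 hu.
  have := congr1 (fun f : bmatrix L T => f (l, j)) hb0; rewrite blockE => ->.
  by rewrite h0 blockE mul0r add0r.
have hv0 : 0 <= u - T%:Z by lia.
have hv1 : u - T%:Z < T%:Z by lia.
have [j hj] := ord_of_int hv0 hv1.
have := congr1 (fun f : bmatrix L T => f (l, j)) hb1; rewrite blockE -hj.
have -> : ((n + 1) * T%:Z + (u - T%:Z) = n * T%:Z + u)%R by rewrite mulrDl mul1r; lia.
move=> ->; rewrite h1 blockE -hj mul1r; congr (S' l _); lia.
Qed.

Lemma char_bound (L : finType) (I : L -> {set {set L}}) (D : L -> L -> int) l phi l' : phi \in I l -> l' \in phi -> (absz (D l l') <= character I D)%N.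
move=> hphi hl.
rewrite /character.
have h1 := (leq_bigmax (F := fun l => \max_(phi in I l) \max_(l' in phi) `|D l l'|%N) l).
have h2 := (leq_bigmax_cond (P := fun phi : {set L} => phi \in I l) (F := fun phi => \max_(l' in phi) `|D l l'|%N) phi hphi).
have h3 := (leq_bigmax_cond (P := fun x : L => x \in phi) (F := fun x => `|D l x|%N) l' hl).
simpl in *.
exact: (leq_trans h3 (leq_trans h2 h1)).
Qed.

Theorem lemma4 (L : finType) (I : L -> {set {set L}}) (D : L -> L -> int)
  (T k : nat) (A : nat -> bmatrix L T) (S : schedule L) :
  network_ok I ->
  binary_profile I ->
  (maxn (character I D) 1 <= T)%N ->
  (1 <= k)%N ->
  closed_path I D k A ->
  (forall (a : int) (i : nat), (i < k)%N ->
      block S T (a * k%:Z + i%:Z)%R = A i) ->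
  collision_free I D S.
Proof.
move=> _ hbin hT hk hcp hS l t hlt [phi hphi hcol].
have /cards1P [l' hl'] : #|phi| == 1%N by rewrite (hbin l phi hphi).
have hl'in : l' \in phi by rewrite hl' set11.
have hSd := hcol l' hl'in.
set d := D l l' in hSd.
have hdc : (absz d <= character I D)%N.
  exact: char_bound hphi hl'in.
have hdT : (`|d| <= T%:Z)%R.
  have : (absz d <= T)%N by apply: leq_trans hdc (leq_trans (leq_maxl _ _) hT).
  lia.
have hT1 : (0 < T)%N by apply: leq_trans hT; rewrite leq_maxr.
set n0 := (t %/ T%:Z)%Z.
have hj0 : (0 <= (t %% T%:Z)%Z)%R by apply: modz_ge0; lia.
have hj1 : ((t %% T%:Z)%Z < T%:Z)%R by apply: ltz_pmod; lia.
have ht : t = (n0 * T%:Z + (t %% T%:Z)%Z)%R by rewrite /n0 -divz_eq.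
set j := (t %% T%:Z)%Z in hj0 hj1 ht.
have key : exists n u, [/\ (0 <= u)%R, (u < 2 * T%:Z)%R, (0 <= u + d)%R,
    (u + d < 2 * T%:Z)%R & t = (n * T%:Z + u)%R].
  case: (lerP 0 d) => hd.
    have hdl : (d <= T%:Z)%R by apply: le_trans (ler_norm _) hdT.
    exists n0, j; split => //; lia.
  have hdl : (- d <= T%:Z)%R by rewrite -normrN in hdT; apply: le_trans (ler_norm _) hdT.
  exists (n0 - 1)%R, (j + T%:Z)%R; split.
  - lia.
  - lia.
  - lia.
  - lia.
  - rewrite {1}ht mulrBl mul1r; lia.
have [n [u [hu0 hu1 hud0 hud1 htn]]] := key.
have [S' [hcf hW]] := @window L I D T k A S hk hcp hS n.
have e1 : S' l u by rewrite -(hW l u hu0 hu1) -htn.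
apply: (hcf l u e1).
exists phi => // l''; rewrite hl' inE => /eqP ->.
have e2 := hW l' (u + d)%R hud0 hud1.
rewrite -e2 addrA -htn.
exact: hSd.
Qed.
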